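(* For $(p,q,r,s)$ define $$\mathcal{J}_1=\frac{(p^2+s^2)qr+\beta(p+s)(q^2+r^2+ps)+\beta^2qr}{pqrs},$$ $$\mathcal{J}_2=\frac{pr^2(q+r+s)+sq^2(p+q+r)+ps(pr+ps+qs)+\beta qr(q+r)}{pqrs},$$ $$\mathcal{J}_3=\frac{(ps+q^2+r^2)(pr^2+ps^2+q^2s+\beta qr)(pr^2+p^2s+q^2s+\beta qr)}{p^2q^2r^2s^2}.$$ Then for every $\beta\in\mathbb{Z}\setminus\{0\}$ and every $(\lambda_1:\lambda_2:\lambda_3)\in\mathbb{P}^2$, the Diophantine equation $$\lambda_1\mathcal{J}_1+\lambda_2\mathcal{J}_2+\lambda_3\mathcal{J}_3=\lambda_1(\beta^2+6\beta+2)+\lambda_2(2\beta+9)+3\lambda_3(\beta+3)^2$$ has infinitely many integer solutions $(p,q,r,s)$. *)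

(* Defs.v *)
From mathcomp Require Import all_boot all_order all_algebra.
Set Implicit Arguments. Unset Strict Implicit. Unset Printing Implicit Defensive.
Import Order.TTheory GRing.Theory Num.Theory.
Local Open Scope ring_scope.

Section Js.
Variable R : numFieldType.
Variables (beta p q r s : int).
Let b : R := beta%:~R.
Let P : R := p%:~R.
Let Q : R := q%:~R.
Let Rr : R := r%:~R.
Let S : R := s%:~R.

Definition J1 : R :=
  ((P^+2 + S^+2) * Q * Rr + b * (P + S) * (Q^+2 + Rr^+2 + P * S)
    + b^+2 * Q * Rr) / (P * Q * Rr * S).

Definition J2 : R :=
  (P * Rr^+2 * (Q + Rr + S) + S * Q^+2 * (P + Q + Rr)
    + P * S * (P * Rr + P * S + Q * S) + b * Q * Rr * (Q + Rr))
  / (P * Q * Rr * S).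

Definition J3 : R :=
  ((P * S + Q^+2 + Rr^+2) * (P * Rr^+2 + P * S^+2 + Q^+2 * S + b * Q * Rr)
    * (P * Rr^+2 + P^+2 * S + Q^+2 * S + b * Q * Rr))
  / (P^+2 * Q^+2 * Rr^+2 * S^+2).
End Js.

(* (p,q,r,s) is an integer solution of the equation (with p q r s nonzero so
   that the J_i are defined). *)
Definition is_solution (R : numFieldType) (beta : int) (l1 l2 l3 : R)
  (x : int * int * int * int) : Prop :=
  let: (p, q, r, s) := x in
  [/\ p != 0, q != 0, r != 0 & s != 0] /\
  l1 * J1 R beta p q r s + l2 * J2 R beta p q r s + l3 * J3 R beta p q r s
  = l1 * (beta%:~R ^+ 2 + 6 * beta%:~R + 2)
    + l2 * (2 * beta%:~R + 9)
    + 3 * l3 * (beta%:~R + 3) ^+ 2.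

(* Main.v *)
Require Import Defs.
From mathcomp Require Import all_boot all_order all_algebra.
From mathcomp Require Import ring zify.
Import Order.TTheory GRing.Theory Num.Theory.
Local Open Scope ring_scope.
Set Implicit Arguments. Unset Strict Implicit.

Section Gen.
Variable R : numFieldType.
Implicit Types b p q r s a : R.

Definition Jg1 b p q r s : R :=
  ((p^+2 + s^+2) * q * r + b * (p + s) * (q^+2 + r^+2 + p * s)
    + b^+2 * q * r) / (p * q * r * s).
Definition Jg2 b p q r s : R :=
  (p * r^+2 * (q + r + s) + s * q^+2 * (p + q + r)
    + p * s * (p * r + p * s + q * s) + b * q * r * (q + r))
  / (p * q * r * s).
Definition Jg3 b p q r s : R :=
  ((p * s + q^+2 + r^+2) * (p * r^+2 + p * s^+2 + q^+2 * s + b * q * r)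
    * (p * r^+2 + p^+2 * s + q^+2 * s + b * q * r))
  / (p^+2 * q^+2 * r^+2 * s^+2).

Lemma J1E (bt p q r s : int) :
  J1 R bt p q r s = Jg1 bt%:~R p%:~R q%:~R r%:~R s%:~R.
Proof. by []. Qed.
Lemma J2E (bt p q r s : int) :
  J2 R bt p q r s = Jg2 bt%:~R p%:~R q%:~R r%:~R s%:~R.
Proof. by []. Qed.
Lemma J3E (bt p q r s : int) :
  J3 R bt p q r s = Jg3 bt%:~R p%:~R q%:~R r%:~R s%:~R.
Proof. by []. Qed.

Lemma num_nz a N : a != 0 -> N / a != 0 -> N != 0.
Proof. by move=> _; apply: contraNneq => ->; rewrite mul0r. Qed.

Lemma I1 b a p q r : a != 0 -> p != 0 -> q != 0 -> r != 0 ->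
  (p * r + b * q) / a != 0 ->
  [/\ Jg1 b p q r ((p * r + b * q) / a) = Jg1 b a p q r,
      Jg2 b p q r ((p * r + b * q) / a) = Jg2 b a p q r &
      Jg3 b p q r ((p * r + b * q) / a) = Jg3 b a p q r].
Proof.
move=> ha hp hq hr hs; have hN := num_nz ha hs.
rewrite /Jg1 /Jg2 /Jg3; split; field; by rewrite ?ha ?hp ?hq ?hr ?hN.
Qed.


Lemma I2 b a0 a1 a2 a3 a4 a5 a6 a7 a8 :
  a0 != 0 -> a1 != 0 -> a2 != 0 -> a3 != 0 -> a4 != 0 -> a5 != 0 ->
  a4 = (a1 * a3 + b * a2) / a0 -> a5 = (a2 * a4 + b * a3) / a1 ->
  a6 = (a3 * a5 + b * a4) / a2 -> a7 = (a4 * a6 + b * a5) / a3 ->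
  a8 = (a5 * a7 + b * a6) / a4 ->
  (a6 * a8 + b * a7) / a5 + a3 - Jg1 b a0 a1 a2 a3 * a6
  = a6 + a0 - Jg1 b a0 a1 a2 a3 * a3.
Proof.
move=> h0 h1 h2 h3 h4 h5 e4 e5 e6 e7 e8.
rewrite e8 e7 e6; move: h5; rewrite e5; move: h4; rewrite e4 => h4 h5.
have n4 := num_nz h0 h4.
have n5 : a2 * (a1 * a3 + b * a2) + b * a3 * a0 != 0.
  have := mulf_neq0 (mulf_neq0 h5 h1) h0.
  congr (_ != 0); field; by rewrite ?h0 ?h1.
rewrite /Jg1; field; by rewrite ?h0 ?h1 ?h2 ?h3 ?n4 ?n5.
Qed.

Definition Qrel b (x : nat -> R) n := x (n+4)%N * x n = x (n+1)%N * x (n+3)%N + b * x (n+2)%N.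

Lemma Jconst b (x : nat -> R) m : (forall n, x n != 0) ->
  (forall k, (k < m)%N -> Qrel b x k) ->
  [/\ Jg1 b (x m) (x m.+1) (x m.+2) (x m.+3) = Jg1 b (x 0%N) (x 1%N) (x 2%N) (x 3%N),
      Jg2 b (x m) (x m.+1) (x m.+2) (x m.+3) = Jg2 b (x 0%N) (x 1%N) (x 2%N) (x 3%N) &
      Jg3 b (x m) (x m.+1) (x m.+2) (x m.+3) = Jg3 b (x 0%N) (x 1%N) (x 2%N) (x 3%N)].
Proof.
move=> hnz; elim: m => [|m IH] hQ; first by [].
have [<- <- <-] := IH (fun k hk => hQ k (ltnW hk)).
have := hQ m (ltnSn m); rewrite /Qrel ?addnS ?addn0 => hq.
have e : x m.+4 = (x m.+1 * x m.+3 + b * x m.+2) / x m.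
  by rewrite -hq mulfK // hnz.
have := @I1 b (x m) (x m.+1) (x m.+2) (x m.+3) (hnz _) (hnz _) (hnz _) (hnz _).
by rewrite -e => /(_ (hnz _)) [-> -> ->].
Qed.

Lemma Qall b t1 (x : nat -> R) (C : nat -> R) :
  (forall n, x n != 0) ->
  (forall n, x (n + 6)%N = t1 * x (n + 3)%N - x n + C n) ->
  (forall n, C (n + 3)%N = C n) ->
  (forall k, (k < 5)%N -> Qrel b x k) ->
  Jg1 b (x 0%N) (x 1%N) (x 2%N) (x 3%N) = t1 ->
  forall n, Qrel b x n.
Proof.
move=> hnz hlin hC hbase hJ n; elim/ltn_ind: n => n IH.
case: (ltnP n 5) => [/hbase //|big].
have -> : n = ((n - 5) + 5)%N by rewrite subnK.
set m := (n - 5)%N.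
have ltm k : (k <= 4)%N -> (m + k < n)%N by move=> hk; rewrite /m; lia.
have [hK _ _] := @Jconst b x m hnz (fun k hk => IH k (ltac:(rewrite /m in hk; lia))).
rewrite hJ in hK.
have q k : (k <= 4)%N -> Qrel b x (m + k)%N by move=> hk; apply: IH; apply: ltm.
have e k : (k <= 4)%N -> x (m + k + 4)%N = (x (m + k + 1)%N * x (m + k + 3)%N + b * x (m + k + 2)%N) / x (m + k)%N.
  by move=> hk; rewrite -(q k hk) mulfK // hnz.
have := @I2 b (x m) (x (m + 1)%N) (x (m + 2)%N) (x (m + 3)%N) (x (m + 4)%N) (x (m + 5)%N) (x (m + 6)%N) (x (m + 7)%N) (x (m + 8)%N)
  (hnz _) (hnz _) (hnz _) (hnz _) (hnz _) (hnz _).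
have := e 0%N isT; have := e 1%N isT; have := e 2%N isT; have := e 3%N isT; have := e 4%N isT.
rewrite ?addnS ?addn0 => e4 e3 e2 e1 e0.
rewrite ?addnS ?addn0 => /(_ e0 e1 e2 e3 e4); rewrite hK.
move=> h.
have := hlin m; have := hlin (m + 3)%N; rewrite hC ?addnS ?addn0 => l2 l1.
have hc : C m = x (m + 6)%N + x m - t1 * x (m + 3)%N by move: l1; rewrite ?addnS ?addn0 => ->; ring.
have h' : (x (m + 6)%N * x (m + 8)%N + b * x (m + 7)%N) / x (m + 5)%N
   = t1 * x (m + 6)%N - x (m + 3)%N + (x (m + 6)%N + x m - t1 * x (m + 3)%N).
  by move: h; rewrite ?addnS ?addn0 => h; rewrite -h; ring.
rewrite ?addnS ?addn0 in hc h'.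
rewrite /Qrel ?addnS ?addn0 l2 hc -h' mulfVK //.
Qed.
End Gen.

Record W6 := Mk { w0 : int; w1 : int; w2 : int; w3 : int; w4 : int; w5 : int }.

Section Z.
Variable bt : int.
Variable init : W6.
Definition tt : int := bt ^+ 2 + 6 * bt + 2.
Definition cc (n : nat) : int := if (n %% 3 == 0)%N then - (3 * bt) else - (bt * (bt + 3)).
Fixpoint zw (n : nat) : W6 :=
  match n with
  | 0 => init
  | k.+1 => let w := zw k in
      Mk (w1 w) (w2 w) (w3 w) (w4 w) (w5 w) (tt * w3 w - w0 w + cc k)
  end.
Definition z n := w0 (zw n).

Lemma zlin n : z (n + 6)%N = tt * z (n + 3)%N - z n + cc n.
Proof. by rewrite !addnS !addn0. Qed.

Lemma cc3 m j : (j < 3)%N -> cc (3 * m + j)%N = cc j.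
Proof. by move=> hj; rewrite /cc mulnC modnMDl. Qed.

Lemma zres j m : (j < 3)%N ->
  z (3 * m.+2 + j)%N = tt * z (3 * m.+1 + j)%N - z (3 * m + j)%N + cc j.
Proof.
move=> hj; rewrite -(cc3 m hj).
have e1 : (3 * m.+1 + j = 3 * m + j + 3)%N by lia.
have e2 : (3 * m.+2 + j = 3 * m + j + 6)%N by lia.
by rewrite e1 e2 zlin.
Qed.
End Z.

Definition unb (y : nat -> int) := forall M : nat, exists m, (M%:Z < `|y m|).
Definition good (y : nat -> int) := forall m, y m != 0.

Lemma finish_grow (y : nat -> int) m0 :
  (forall m, (m <= m0)%N -> y m != 0) ->
  (forall k, (k.+1)%:Z <= `|y (m0 + k.+1)%N|) -> good y /\ unb y.
Proof.
move=> hs hg; split.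
  move=> m; case: (leqP m m0) => [/hs //|hm].
  have h := hg (m - m0).-1.
  rewrite prednK ?subn_gt0 // subnKC ?(ltnW hm) // in h.
  by apply/eqP => e; rewrite e normr0 in h; lia.
move=> M; exists (m0 + M.+1)%N; apply: lt_le_trans (hg M); lia.
Qed.

Lemma grow_hyp (t c : int) (y : nat -> int) m0 :
  (forall m, y m.+2 = t * y m.+1 - y m + c) -> 3 <= `|t| ->
  `|y m0| + `|c| + 1 <= `|y m0.+1| ->
  forall k, (k.+1)%:Z <= `|y (m0 + k.+1)%N|.
Proof.
move=> hr ht h0.
have inc k : `|y (m0 + k)%N| + `|c| + 1 <= `|y (m0 + k).+1|.
  elim: k => [|k IH]; first by rewrite addn0.
  rewrite addnS hr.
  set y1 := y (m0 + k).+1 in IH *; set y0 := y (m0 + k)%N in IH *.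
  have h1 : 3 * `|y1| <= `|t| * `|y1| by nia.
  have h2 : `|t*y1| <= `|t * y1 - y0 + c| + `|y0| + `|c| by nia.
  rewrite normrM in h2; lia.
elim=> [|k IH]; first by have := inc 0%N; rewrite addn0 addn1; lia.
have := inc k.+1; rewrite !addnS in IH *; lia.
Qed.

Lemma grow_par (c s : int) (y : nat -> int) m0 :
  (forall m, y m.+2 = 2 * y m.+1 - y m + c) -> s * s = 1 -> 0 <= s * c ->
  1 <= s * (y m0.+1 - y m0) -> 1 <= s * y m0.+1 ->
  forall k, (k.+1)%:Z <= `|y (m0 + k.+1)%N|.
Proof.
move=> hr hs hc hd hy.
have inc k : 1 <= s * (y (m0 + k).+1 - y (m0 + k)%N).
  elim: k => [|k IH]; first by rewrite addn0.
  rewrite addnS hr; nia.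
have pos k : (k.+1)%:Z <= s * y (m0 + k.+1)%N.
  elim: k => [|k IH]; first by rewrite addn1.
  have := inc k.+1; rewrite !addnS in IH *; nia.
move=> k; apply: le_trans (pos k) _.
have : `|s| = 1 by nia.
by move=> h; rewrite -[X in X <= _]ger0_norm ?normrM ?h ?mul1r //; apply: le_trans (pos k).
Qed.

Definition NJ1 (b p q r s : int) : int :=
  (p^+2 + s^+2) * q * r + b * (p + s) * (q^+2 + r^+2 + p * s) + b^+2 * q * r.
Definition NJ2 (b p q r s : int) : int :=
  p * r^+2 * (q + r + s) + s * q^+2 * (p + q + r)
    + p * s * (p * r + p * s + q * s) + b * q * r * (q + r).
Definition NJ3 (b p q r s : int) : int :=
  (p * s + q^+2 + r^+2) * (p * r^+2 + p * s^+2 + q^+2 * s + b * q * r)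
    * (p * r^+2 + p^+2 * s + q^+2 * s + b * q * r).

Section Cast.
Variable R : numFieldType.
Variables (b p q r s : int).
Hypotheses (hp : p != 0) (hq : q != 0) (hr : r != 0) (hs : s != 0).
Let cR (v : int) : R := v%:~R.

Lemma cnz (v : int) : v != 0 -> cR v != 0.
Proof. by rewrite /cR intr_eq0. Qed.

Lemma castJ1 (T : int) : NJ1 b p q r s = T * (p * q * r * s) ->
  Jg1 (cR b) (cR p) (cR q) (cR r) (cR s) = cR T.
Proof.
move=> E; have hD : cR p * cR q * cR r * cR s != 0.
  by rewrite !mulf_neq0 ?cnz.
have e : (cR p ^+ 2 + cR s ^+ 2) * cR q * cR r
   + cR b * (cR p + cR s) * (cR q ^+ 2 + cR r ^+ 2 + cR p * cR s)
   + cR b ^+ 2 * cR q * cR r = cR T * (cR p * cR q * cR r * cR s).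
  have := congr1 cR E; rewrite /cR /NJ1 => h.
  transitivity (((p ^+ 2 + s ^+ 2) * q * r + b * (p + s) * (q ^+ 2 + r ^+ 2 + p * s) + b ^+ 2 * q * r)%:~R : R); first ring.
  by rewrite h; ring.
by rewrite /Jg1 e mulfK.
Qed.

Lemma castJ2 (T : int) : NJ2 b p q r s = T * (p * q * r * s) ->
  Jg2 (cR b) (cR p) (cR q) (cR r) (cR s) = cR T.
Proof.
move=> E; have hD : cR p * cR q * cR r * cR s != 0.
  by rewrite !mulf_neq0 ?cnz.
have e : cR p * cR r ^+ 2 * (cR q + cR r + cR s) + cR s * cR q ^+ 2 * (cR p + cR q + cR r)
    + cR p * cR s * (cR p * cR r + cR p * cR s + cR q * cR s) + cR b * cR q * cR r * (cR q + cR r)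
    = cR T * (cR p * cR q * cR r * cR s).
  have := congr1 cR E; rewrite /cR /NJ2 => h.
  transitivity ((p * r^+2 * (q + r + s) + s * q^+2 * (p + q + r)
    + p * s * (p * r + p * s + q * s) + b * q * r * (q + r))%:~R : R); first ring.
  by rewrite h; ring.
by rewrite /Jg2 e mulfK.
Qed.

Lemma castJ3 (T : int) : NJ3 b p q r s = T * (p^+2 * q^+2 * r^+2 * s^+2) ->
  Jg3 (cR b) (cR p) (cR q) (cR r) (cR s) = cR T.
Proof.
move=> E; have hD : cR p ^+ 2 * cR q ^+ 2 * cR r ^+ 2 * cR s ^+ 2 != 0.
  by rewrite !mulf_neq0 ?expf_neq0 ?cnz.
have e : (cR p * cR s + cR q ^+ 2 + cR r ^+ 2) * (cR p * cR r ^+ 2 + cR p * cR s ^+ 2 + cR q ^+ 2 * cR s + cR b * cR q * cR r)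
    * (cR p * cR r ^+ 2 + cR p ^+ 2 * cR s + cR q ^+ 2 * cR s + cR b * cR q * cR r)
    = cR T * (cR p ^+ 2 * cR q ^+ 2 * cR r ^+ 2 * cR s ^+ 2).
  have := congr1 cR E; rewrite /cR /NJ3 => h.
  transitivity (((p * s + q^+2 + r^+2) * (p * r^+2 + p * s^+2 + q^+2 * s + b * q * r)
    * (p * r^+2 + p^+2 * s + q^+2 * s + b * q * r))%:~R : R); first ring.
  by rewrite h; ring.
by rewrite /Jg3 e mulfK.
Qed.
End Cast.

Lemma cc3n bt n : cc bt (n + 3)%N = cc bt n.
Proof. by rewrite /cc modnDr. Qed.

Lemma main_from (bt : int) (init : W6) :
  (forall n, z bt init n != 0) -> unb (z bt init) ->
  (forall k, (k < 5)%N -> z bt init (k + 4)%N * z bt init k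
       = z bt init (k + 1)%N * z bt init (k + 3)%N + bt * z bt init (k + 2)%N) ->
  NJ1 bt (z bt init 0) (z bt init 1) (z bt init 2) (z bt init 3)
    = tt bt * (z bt init 0 * z bt init 1 * z bt init 2 * z bt init 3) ->
  NJ2 bt (z bt init 0) (z bt init 1) (z bt init 2) (z bt init 3)
    = (2 * bt + 9) * (z bt init 0 * z bt init 1 * z bt init 2 * z bt init 3) ->
  NJ3 bt (z bt init 0) (z bt init 1) (z bt init 2) (z bt init 3)
    = (3 * (bt + 3) ^+ 2) * (z bt init 0 ^+ 2 * z bt init 1 ^+ 2 * z bt init 2 ^+ 2 * z bt init 3 ^+ 2) ->
  forall (R : numFieldType) (l1 l2 l3 : R),
  ~ (exists sol : seq (int * int * int * int),
       forall x, is_solution bt l1 l2 l3 x -> x \in sol).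
Proof.
move=> hnz hunb hQ hJ1 hJ2 hJ3 R l1 l2 l3 [sol hsol].
pose x := fun n => ((z bt init n)%:~R : R).
have hxnz n : x n != 0 by rewrite /x intr_eq0.
have hlin n : x (n + 6)%N = (tt bt)%:~R * x (n + 3)%N - x n + (cc bt n)%:~R.
  by rewrite /x zlin; ring.
have hC n : ((cc bt (n + 3)%N)%:~R : R) = (cc bt n)%:~R by rewrite cc3n.
have hbase k : (k < 5)%N -> Qrel (bt%:~R) x k.
  move=> hk; rewrite /Qrel /x.
  have := congr1 (fun v : int => (v%:~R : R)) (hQ k hk) => /= h.
  transitivity (((z bt init (k + 4)%N * z bt init k))%:~R : R); first ring.
  by rewrite h; ring.
have nz k : z bt init k != 0 := hnz k.
have hJ : Jg1 (bt%:~R) (x 0%N) (x 1%N) (x 2%N) (x 3%N) = (tt bt)%:~R.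
  by apply: castJ1.
have hQR := Qall hxnz hlin hC hbase hJ.
have hsolN n : is_solution bt l1 l2 l3 (z bt init n, z bt init n.+1, z bt init n.+2, z bt init n.+3).
  split; first by split.
  rewrite J1E J2E J3E.
  have [e1 e2 e3] := @Jconst R (bt%:~R) x n hxnz (fun k _ => hQR k).
  rewrite /x /= in e1 e2 e3; rewrite e1 e2 e3.
  rewrite (castJ1 R (nz 0%N) (nz 1%N) (nz 2%N) (nz 3%N) hJ1).
  rewrite (castJ2 R (nz 0%N) (nz 1%N) (nz 2%N) (nz 3%N) hJ2).
  rewrite (castJ3 R (nz 0%N) (nz 1%N) (nz 2%N) (nz 3%N) hJ3).
  rewrite /tt; ring.
pose M := (\max_(y <- sol) `|y.1.1.1|%N)%N.
have [n hn] := hunb M.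
have := @leq_bigmax_seq _ sol xpredT (fun y : int * int * int * int => `|y.1.1.1|%N) _ (hsol _ (hsolN n)) isT.
rewrite /= -/M => hle.
move: hn; rewrite -abszE; lia.
Qed.

Definition yr bt init j := fun m => z bt init (3 * m + j)%N.

Lemma yr_rec bt init j : (j < 3)%N ->
  forall m, yr bt init j m.+2 = tt bt * yr bt init j m.+1 - yr bt init j m + cc bt j.
Proof. by move=> hj m; rewrite /yr zres. Qed.

Lemma all_nz bt init :
  (forall j, (j < 3)%N -> good (yr bt init j)) -> forall n, z bt init n != 0.
Proof.
move=> h n; rewrite (divn_eq n 3) mulnC.
exact: (h _ (ltn_pmod n (isT : (0 < 3)%N)) (n %/ 3)%N).
Qed.

Lemma unb_res bt init j : unb (yr bt init j) -> unb (z bt init).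
Proof. by move=> h M; have [m hm] := h M; exists (3 * m + j)%N. Qed.

Lemma chk_nz (y : nat -> int) m0 :
  all (fun m => y m != 0) (iota 0 m0.+1) -> forall m, (m <= m0)%N -> y m != 0.
Proof. by move=> /allP h m hm; apply: h; rewrite mem_iota. Qed.

Lemma res_hyp bt init j m0 : (j < 3)%N -> 3 <= `|tt bt| ->
  all (fun m => yr bt init j m != 0) (iota 0 m0.+1) ->
  `|yr bt init j m0| + `|cc bt j| + 1 <= `|yr bt init j m0.+1| ->
  good (yr bt init j) /\ unb (yr bt init j).
Proof.
move=> hj ht hc hg; apply: (finish_grow (chk_nz hc)).
exact: (grow_hyp (yr_rec bt init hj) ht hg).
Qed.

Lemma res_par bt init j m0 s : (j < 3)%N -> tt bt = 2 -> s * s = 1 ->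
  0 <= s * cc bt j ->
  1 <= s * (yr bt init j m0.+1 - yr bt init j m0) -> 1 <= s * yr bt init j m0.+1 ->
  all (fun m => yr bt init j m != 0) (iota 0 m0.+1) ->
  good (yr bt init j) /\ unb (yr bt init j).
Proof.
move=> hj ht hs hc hd hy hn; apply: (finish_grow (chk_nz hn)).
have hr := yr_rec bt init hj; rewrite ht in hr.
exact: (grow_par hr hs hc hd hy).
Qed.

Lemma res_const bt init j : (j < 3)%N -> tt bt + cc bt j = 2 ->
  yr bt init j 0 = 1 -> yr bt init j 1 = 1 -> good (yr bt init j).
Proof.
move=> hj hc h0 h1.
have H m : yr bt init j m = 1 /\ yr bt init j m.+1 = 1.
  elim: m => [|m [IH1 IH2]]; first by [].
  by split => //; rewrite yr_rec // IH1 IH2; lia.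
by move=> m; have [-> _] := H m.
Qed.

Definition init0 (bt : int) := Mk 1 1 1 1 (bt + 1) (2 * bt + 1).

Lemma case_gen bt : (1 <= bt) \/ (bt <= -7) ->
  forall (R : numFieldType) (l1 l2 l3 : R),
  ~ (exists sol : seq (int * int * int * int),
       forall x, is_solution bt l1 l2 l3 x -> x \in sol).
Proof.
move=> hb.
pose I := init0 bt.
have z6 : z bt I 6 = tt bt * 1 - 1 + cc bt 0 by [].
have z7 : z bt I 7 = tt bt * (bt + 1) - 1 + cc bt 1 by [].
have z8 : z bt I 8 = tt bt * (2 * bt + 1) - 1 + cc bt 2 by [].
have c0 : cc bt 0 = - (3 * bt) by [].
have c1 : cc bt 1 = - (bt * (bt + 3)) by [].
have c2 : cc bt 2 = - (bt * (bt + 3)) by [].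
have hz0 : z bt I 0 = 1 by []. have hz1 : z bt I 1 = 1 by [].
have hz2 : z bt I 2 = 1 by []. have hz3 : z bt I 3 = 1 by [].
have hz4 : z bt I 4 = bt + 1 by []. have hz5 : z bt I 5 = 2 * bt + 1 by [].
have ht : 3 <= `|tt bt| by rewrite /tt; case: hb => hb; nia.
have g j : (j < 3)%N -> good (yr bt I j) /\ unb (yr bt I j).
  move=> hj; apply: (res_hyp (m0 := 1%N) hj ht).
    case: j hj => [|[|[|]]] // _; rewrite /= /yr /= ?andbT.
    - by rewrite (_ : (3 * 1 + 1 = 4)%N) // hz4; lia.
    - by rewrite (_ : (3 * 1 + 2 = 5)%N) // hz5; lia.
  case: j hj => [|[|[|]]] // _; rewrite /yr /=.
  - rewrite (_ : (3 * 1 + 0 = 3)%N) // (_ : (3 * 2 + 0 = 6)%N) // hz3 z6 c0 /tt.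
    case: hb => hb; nia.
  - rewrite (_ : (3 * 1 + 1 = 4)%N) // (_ : (3 * 2 + 1 = 7)%N) // hz4 z7 c1 /tt.
    case: hb => hb; nia.
  - rewrite (_ : (3 * 1 + 2 = 5)%N) // (_ : (3 * 2 + 2 = 8)%N) // hz5 z8 c2 /tt.
    case: hb => hb; nia.
apply: main_from.
- exact: all_nz (fun j hj => (g j hj).1).
- exact: unb_res (g 0%N isT).2.
- case=> [|[|[|[|[|]]]]] // _; rewrite /= ?hz0 ?hz1 ?hz2 ?hz3 ?hz4 ?hz5 ?z6 ?z7 ?z8 ?c0 ?c1 ?c2 /tt; ring.
- by rewrite hz0 hz1 hz2 hz3 /NJ1 /tt; ring.
- by rewrite hz0 hz1 hz2 hz3 /NJ2; ring.
- by rewrite hz0 hz1 hz2 hz3 /NJ3; ring.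
Qed.

Lemma case_m1 (R : numFieldType) (l1 l2 l3 : R) :
  ~ (exists sol : seq (int * int * int * int),
       forall x, is_solution (-1) l1 l2 l3 x -> x \in sol).
Proof.
pose I := Mk (-1) 1 4 5 (-1) (-9).
have g0 : good (yr (-1) I 0) /\ unb (yr (-1) I 0).
  by apply: (res_hyp (m0 := 0%N)); vm_compute.
have g1 : good (yr (-1) I 1) /\ unb (yr (-1) I 1).
  by apply: (res_hyp (m0 := 1%N)); vm_compute.
have g2 : good (yr (-1) I 2) /\ unb (yr (-1) I 2).
  by apply: (res_hyp (m0 := 0%N)); vm_compute.
apply: main_from.
- apply: all_nz; case=> [|[|[|]]] // _; [exact: g0.1 | exact: g1.1 | exact: g2.1].
- exact: unb_res g0.2.
- by case=> [|[|[|[|[|]]]]] // _; vm_compute.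
- by vm_compute.
- by vm_compute.
- by vm_compute.
Qed.

Lemma case_m2 (R : numFieldType) (l1 l2 l3 : R) :
  ~ (exists sol : seq (int * int * int * int),
       forall x, is_solution (-2) l1 l2 l3 x -> x \in sol).
Proof.
pose I := init0 (-2).
have g0 : good (yr (-2) I 0) /\ unb (yr (-2) I 0).
  by apply: (res_hyp (m0 := 2%N)); vm_compute.
have g1 : good (yr (-2) I 1) /\ unb (yr (-2) I 1).
  by apply: (res_hyp (m0 := 1%N)); vm_compute.
have g2 : good (yr (-2) I 2) /\ unb (yr (-2) I 2).
  by apply: (res_hyp (m0 := 1%N)); vm_compute.
apply: main_from.
- apply: all_nz; case=> [|[|[|]]] // _; [exact: g0.1 | exact: g1.1 | exact: g2.1].
- exact: unb_res g0.2.
- by case=> [|[|[|[|[|]]]]] // _; vm_compute.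
- by vm_compute.
- by vm_compute.
- by vm_compute.
Qed.

Lemma case_m3 (R : numFieldType) (l1 l2 l3 : R) :
  ~ (exists sol : seq (int * int * int * int),
       forall x, is_solution (-3) l1 l2 l3 x -> x \in sol).
Proof.
pose I := init0 (-3).
have g0 : good (yr (-3) I 0) /\ True.
  by split => //; apply: res_const; vm_compute.
have g1 : good (yr (-3) I 1) /\ unb (yr (-3) I 1).
  by apply: (res_hyp (m0 := 0%N)); vm_compute.
have g2 : good (yr (-3) I 2) /\ unb (yr (-3) I 2).
  by apply: (res_hyp (m0 := 0%N)); vm_compute.
apply: main_from.
- apply: all_nz; case=> [|[|[|]]] // _; [exact: g0.1 | exact: g1.1 | exact: g2.1].
- exact: unb_res g1.2.
- by case=> [|[|[|[|[|]]]]] // _; vm_compute.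
- by vm_compute.
- by vm_compute.
- by vm_compute.
Qed.

Lemma case_m4 (R : numFieldType) (l1 l2 l3 : R) :
  ~ (exists sol : seq (int * int * int * int),
       forall x, is_solution (-4) l1 l2 l3 x -> x \in sol).
Proof.
pose I := init0 (-4).
have g0 : good (yr (-4) I 0) /\ unb (yr (-4) I 0).
  by apply: (res_hyp (m0 := 2%N)); vm_compute.
have g1 : good (yr (-4) I 1) /\ unb (yr (-4) I 1).
  by apply: (res_hyp (m0 := 1%N)); vm_compute.
have g2 : good (yr (-4) I 2) /\ unb (yr (-4) I 2).
  by apply: (res_hyp (m0 := 0%N)); vm_compute.
apply: main_from.
- apply: all_nz; case=> [|[|[|]]] // _; [exact: g0.1 | exact: g1.1 | exact: g2.1].
- exact: unb_res g0.2.
- by case=> [|[|[|[|[|]]]]] // _; vm_compute.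
- by vm_compute.
- by vm_compute.
- by vm_compute.
Qed.

Lemma case_m5 (R : numFieldType) (l1 l2 l3 : R) :
  ~ (exists sol : seq (int * int * int * int),
       forall x, is_solution (-5) l1 l2 l3 x -> x \in sol).
Proof.
pose I := init0 (-5).
have g0 : good (yr (-5) I 0) /\ unb (yr (-5) I 0).
  by apply: (res_hyp (m0 := 3%N)); vm_compute.
have g1 : good (yr (-5) I 1) /\ unb (yr (-5) I 1).
  by apply: (res_hyp (m0 := 4%N)); vm_compute.
have g2 : good (yr (-5) I 2) /\ unb (yr (-5) I 2).
  by apply: (res_hyp (m0 := 2%N)); vm_compute.
apply: main_from.
- apply: all_nz; case=> [|[|[|]]] // _; [exact: g0.1 | exact: g1.1 | exact: g2.1].
- exact: unb_res g0.2.
- by case=> [|[|[|[|[|]]]]] // _; vm_compute.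
- by vm_compute.
- by vm_compute.
- by vm_compute.
Qed.

Lemma case_m6 (R : numFieldType) (l1 l2 l3 : R) :
  ~ (exists sol : seq (int * int * int * int),
       forall x, is_solution (-6) l1 l2 l3 x -> x \in sol).
Proof.
pose I := init0 (-6).
have g0 : good (yr (-6) I 0) /\ unb (yr (-6) I 0).
  by apply: (res_par (m0 := 1%N) (s := 1)); vm_compute.
have g1 : good (yr (-6) I 1) /\ unb (yr (-6) I 1).
  by apply: (res_par (m0 := 0%N) (s := -1)); vm_compute.
have g2 : good (yr (-6) I 2) /\ unb (yr (-6) I 2).
  by apply: (res_par (m0 := 0%N) (s := -1)); vm_compute.
apply: main_from.
- apply: all_nz; case=> [|[|[|]]] // _; [exact: g0.1 | exact: g1.1 | exact: g2.1].
- exact: unb_res g0.2.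
- by case=> [|[|[|[|[|]]]]] // _; vm_compute.
- by vm_compute.
- by vm_compute.
- by vm_compute.
Qed.

Unset Implicit Arguments.
Set Strict Implicit.
Theorem corollary3p8 (R : numFieldType) (beta : int) (l1 l2 l3 : R) :
  beta != 0 -> [|| l1 != 0, l2 != 0 | l3 != 0] ->
  ~ (exists sol : seq (int * int * int * int),
       forall x, is_solution beta l1 l2 l3 x -> x \in sol).
Proof.
move=> hb _.
have : (1 <= beta) \/ (beta <= -7) \/ beta = -1 \/ beta = -2 \/ beta = -3
   \/ beta = -4 \/ beta = -5 \/ beta = -6 by lia.
case=> [h|[h|[->|[->|[->|[->|[->|->]]]]]]].
- exact: case_gen (or_introl h) R l1 l2 l3.
- exact: case_gen (or_intror h) R l1 l2 l3.
- exact: case_m1.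
- exact: case_m2.
- exact: case_m3.
- exact: case_m4.
- exact: case_m5.
- exact: case_m6.
Qed.
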